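(* Let $\mathcal F=\{F^c_{t,k}\}$ be an F-system. Then for every even positive integer $t$, $|S_{2t}\setminus Z_{3t,2t}|\ge|S_t\cup Z_{3t/2,t}|+|S_{2t,t}|$.
   Context: F-system: a family $\mathcal F=\{F^c_{t,k}\}$ of sets of positive integers, indexed by $c\in\{A,B\}$ and integers $0<k\le t$, such that (F1) $|F^c_{t,k}|\ge k$ for all $c,t,k$; and (F2) $F^A_{t,k}\cap F^B_{t',k'}=\emptyset$ for all $k\le t$, $k'\le t'$ with $k+k'\le\max(t,t')$. Notation: $F^c_t=\bigcup_{0<\kappa\le\tau\le t}F^c_{\tau,\kappa}$ for $c\in\{A,B\}$; $S_t=F^A_t\cap F^B_t$; $S_{2t,t}=S_{2t}\cap(F^A_{2t,t}\cup F^B_{2t,t})$; for even $t$, $Z_{3t/2,t}=F^A_{3t/2,t}\cap F^B_{3t/2,t}$ (so also $Z_{3t,2t}=F^A_{3t,2t}\cap F^B_{3t,2t}$). *)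

(* Defs.v *)
From mathcomp Require Import all_boot.
Set Implicit Arguments. Unset Strict Implicit. Unset Printing Implicit Defensive.

Inductive colour := cA | cB.

(* A Ffamily of (possibly infinite) sets of positive integers F c t k,
   represented as predicates on nat; only indices 0 < k <= t matter. *)
Definition Ffamily := colour -> nat -> nat -> nat -> Prop.

(* Cardinal comparison |X| >= n  (n finite): an injection 'I_n -> X. *)
Definition card_ge (X : nat -> Prop) (n : nat) : Prop :=
  exists f : 'I_n -> {x : nat | X x}, injective f.

(* Cardinal inequality |X| >= |Y| + |W| (cardinal sum = disjoint union):
   an injection from Y (+) W into X. *)
Definition card_ge_sum (X Y W : nat -> Prop) : Prop :=
  exists f : {x : nat | Y x} + {x : nat | W x} -> {x : nat | X x}, injective f.

Definition is_Fsystem (F : Ffamily) : Prop :=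
  (forall c t k x, 0 < k -> k <= t -> F c t k x -> 0 < x) /\
  (forall c t k, 0 < k -> k <= t -> card_ge (F c t k) k) /\
  (forall t k t' k', 0 < k -> k <= t -> 0 < k' -> k' <= t' ->
     k + k' <= maxn t t' -> forall x, F cA t k x -> F cB t' k' x -> False).

Definition Fup (F : Ffamily) (c : colour) (t : nat) (x : nat) : Prop :=
  exists tau kappa, 0 < kappa /\ kappa <= tau /\ tau <= t /\ F c tau kappa x.

Definition Sset (F : Ffamily) (t : nat) (x : nat) : Prop :=
  Fup F cA t x /\ Fup F cB t x.

Definition S2 (F : Ffamily) (t : nat) (x : nat) : Prop :=
  Sset F (2 * t) x /\ (F cA (2 * t) t x \/ F cB (2 * t) t x).

Definition Zset (F : Ffamily) (s k : nat) (x : nat) : Prop :=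
  F cA s k x /\ F cB s k x.

(* Main.v *)
From Stdlib Require Import ProofIrrelevance Lia.
Require Import Defs.
From mathcomp Require Import all_boot.

Ltac nat_lia := repeat match goal with H : is_true (_ <= _) |- _ =>
    let H' := fresh "Hl" in have H' := (elimT leP H); clear H;
    rewrite -?plusE -?multE -?minusE in H' end;
  try (apply/leP); rewrite -?plusE -?multE -?minusE; lia.

Lemma disjl (F : Ffamily) (hF : is_Fsystem F) t k t' k' x :
  0 < k -> k <= t -> 0 < k' -> k' <= t' -> k + k' <= t ->
  F cA t k x -> F cB t' k' x -> False.
Proof.
move=> ? ? ? ? h; apply: (hF.2.2 t k t' k') => //.
exact: leq_trans h (leq_maxl _ _).
Qed.

Lemma disjr (F : Ffamily) (hF : is_Fsystem F) t k t' k' x :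
  0 < k -> k <= t -> 0 < k' -> k' <= t' -> k + k' <= t' ->
  F cA t k x -> F cB t' k' x -> False.
Proof.
move=> ? ? ? ? h; apply: (hF.2.2 t k t' k') => //.
exact: leq_trans h (leq_maxr _ _).
Qed.

Theorem lemma4 (F : Ffamily) (hF : is_Fsystem F) (t : nat)
  (ht : 0 < t) (hev : ~~ odd t) :
  card_ge_sum
    (fun x => Sset F (2 * t) x /\ ~ Zset F (3 * t) (2 * t) x)
    (fun x => Sset F t x \/ Zset F ((3 * t) %/ 2) t x)
    (S2 F t).
Proof.
have [m Hm] : exists m, t = m.*2.
  by exists t./2; rewrite -[LHS]odd_double_half (negbTE hev).
have Hd : (3 * t) %/ 2 = 3 * m by rewrite Hm -muln2 mulnA mulnK.
rewrite Hd.
have Hm0 : 0 < m by move: ht; rewrite Hm double_gt0.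
have E2 : t = Nat.mul 2 m by rewrite multE Hm -mul2n.
have HY : forall x, Sset F t x \/ Zset F (3 * m) t x ->
    Sset F (2 * t) x /\ ~ Zset F (3 * t) (2 * t) x.
  move=> x [[[ta [ka [h1 [h2 [h3 hA]]]]] [tb [kb [h1' [h2' [h3' hB]]]]]] | [hA hB]].
  - split.
      split; [exists ta, ka | exists tb, kb]; do !split => //; nat_lia.
    move=> [zA zB].
    apply: (@disjl F hF (3*t) (2*t) (tb) (kb) x _ _ _ _ _ zA hB); nat_lia.
  - split.
      split; [exists (3*m), t | exists (3*m), t]; do !split => //; nat_lia.
    move=> [zA zB].
    apply: (@disjl F hF (3*t) (2*t) (3*m) (t) x _ _ _ _ _ zA hB); nat_lia.
have HW : forall x, S2 F t x -> Sset F (2 * t) x /\ ~ Zset F (3 * t) (2 * t) x.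
  move=> x [hS hAB]; split => // [[zA zB]].
  case: hAB => h.
  - apply: (@disjr F hF (2*t) (t) (3*t) (2*t) x _ _ _ _ _ h zB); nat_lia.
  - apply: (@disjl F hF (3*t) (2*t) (2*t) (t) x _ _ _ _ _ zA h); nat_lia.
have Hdisj : forall x, Sset F t x \/ Zset F (3 * m) t x -> S2 F t x -> False.
  move=> x hY [_ hAB].
  case: hY => [[[ta [ka [h1 [h2 [h3 hA]]]]] [tb [kb [h1' [h2' [h3' hB]]]]]] | [hA hB]];
  case: hAB => h.
  - apply: (@disjl F hF (2*t) (t) (tb) (kb) x _ _ _ _ _ h hB); nat_lia.
  - apply: (@disjr F hF (ta) (ka) (2*t) (t) x _ _ _ _ _ hA h); nat_lia.
  - apply: (@disjl F hF (2*t) (t) (3*m) (t) x _ _ _ _ _ h hB); nat_lia.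
  - apply: (@disjr F hF (3*m) (t) (2*t) (t) x _ _ _ _ _ hA h); nat_lia.
exists (fun u => match u with
  | inl y => exist _ (sval y) (HY _ (svalP y))
  | inr w => exist _ (sval w) (HW _ (svalP w)) end).
move=> [[y py]|[y py]] [[z pz]|[z pz]] /= /(congr1 sval) /= e; subst z.
- by rewrite (proof_irrelevance _ py pz).
- by case: (Hdisj _ py pz).
- by case: (Hdisj _ pz py).
- by rewrite (proof_irrelevance _ py pz).
Qed.
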